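(* Let $a_1,\dots,a_8$ be pairwise distinct positive reals and let $$\mathscr H_{\mathrm{small}}=\{P^{(0)}_1(a_i): i=1,\dots,4\}\cup\{P^{(1)}_2(a_i,0): i=5,\dots,8\}.$$ If the simple one-layer GNN with parameters $w_2,W_{11},W_{12},b_1,b_2$ satisfies $h^{(1)}_u(G)=x_u(\Gamma(G))$ for every $G\in\mathscr H_{\mathrm{small}}$ and every $u\in V(G)$, then $w_2W_{11}=w_2W_{12}=1$ and $w_2b_1+b_2=0$.
   Context: Attributed graphs: $G=(V,E,X_{\mathrm v},X_{\mathrm e})$ with $V$ finite, $E$ a set of undirected edges, nonnegative edge weights $x_{(u,v)}=x_{(v,u)}\ge 0$ and nonnegative real node features $x_v$. Every node carries a self-loop of weight $x_{(v,v)}=0$, and $\mathcal N(v)=\{v\}\cup\{u:\{u,v\}\in E\}$. A constant $\beta>0$ (larger than all sums of edge weights considered) encodes ''infinite distance''. $x_v(H)$ denotes the feature of node $v$ in graph $H$. The Bellman–Ford operator $\Gamma$ sends $G$ to the graph with the same vertices, edges and edge weights and node features $x'_v=\min\{x_u+x_{(u,v)}:u\in\mathcal N(v)\}$. For a source $s$, $\mathrm d^{(t)}(s,v)$ is the minimal total weight of a walk from $s$ to $v$ with at most $t$ edges, or $\beta$ if none exists. $P^{(t)}_k(a_1,\dots,a_k)$ is the path graph with vertices $v_0,\dots,v_k$, edges $\{v_{i-1},v_i\}$ of weight $a_i$, and node features $x_{v_i}=\mathrm d^{(t)}(v_0,v_i)$. Simple one-layer GNN: with $\sigma(z)=\max(z,0)$,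 $$h^{(1)}_v(G)=\sigma\Big(w_2\min_{u\in\mathcal N(v)}\sigma\big(W_{11}x_u+W_{12}x_{(u,v)}+b_1\big)+b_2\Big).$$ *)

(* Defs.v *)
From HB Require Import structures.
From mathcomp Require Import all_boot all_order all_algebra.
Unset Printing Implicit Defensive.
Import Order.TTheory GRing.Theory Num.Theory.
Local Open Scope ring_scope.

(* Attributed graph with vertex set 'I_nv, (undirected) edge relation adj,
   edge weights ew (only consulted on edges) and node features xv. *)
Record agraph {R : realFieldType} := AGraph {
  nv : nat;
  adj : rel 'I_nv;
  ew : 'I_nv -> 'I_nv -> R;
  xv : 'I_nv -> R }.
Arguments agraph R : clear implicits.
Arguments AGraph {R} nv adj ew xv.


Definition xe {R : realFieldType} (G : agraph R) (u v : 'I_(nv G)) : R :=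
  if u == v then 0 else ew G u v.

(* min over the neighbourhood N(v) = {v} ∪ {u : {u,v} ∈ E} *)
Definition nbmin {R : realFieldType} (G : agraph R) (v : 'I_(nv G)) (F : 'I_(nv G) -> R) : R :=
  \big[Num.min/F v]_(u | adj G u v) F u.

Definition BF_feat {R : realFieldType} (G : agraph R) (v : 'I_(nv G)) : R :=
  nbmin G v (fun u => xv G u + xe G u v).

Definition Gamma {R : realFieldType} (G : agraph R) : agraph R :=
  AGraph (nv G) (adj G) (ew G) (BF_feat G).

Definition relu {R : realFieldType} (z : R) : R := Num.max z 0.

Definition h1 {R : realFieldType} (w2 W11 W12 b1 b2 : R) (G : agraph R) (v : 'I_(nv G)) : R :=
  relu (w2 * nbmin G v (fun u => relu (W11 * xv G u + W12 * xe G u v + b1)) + b2).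

Fixpoint seqs_upto (n t : nat) : seq (seq 'I_n) :=
  match t with
  | 0 => [:: [::]]
  | t'.+1 => [::] :: [seq x :: p | x <- enum 'I_n, p <- seqs_upto n t']
  end.

Fixpoint walk_weight {R : realFieldType} (G : agraph R) (s : 'I_(nv G)) (p : seq 'I_(nv G)) : R :=
  match p with
  | [::] => 0
  | x :: p' => ew G s x + walk_weight G x p'
  end.

(* d^(t)(s,v): minimal weight of a walk from s to v with at most t edges,
   or beta if there is none *)
Definition dist {R : realFieldType} (beta : R) (t : nat) (G : agraph R) (s v : 'I_(nv G)) : R :=
  let ws := [seq walk_weight G s p | p <- seqs_upto (nv G) t
             & path (adj G) s p && (last s p == v)] in
  match ws with
  | [::] => beta
  | w :: ws' => foldr Num.min w ws'
  end.

(* path graph with vertices v_0..v_k (k = size a), edge {v_(i-1), v_i}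
   of weight a_i (a is 0-indexed: a_i = nth 0 a (i-1)) *)
Definition path_adj (k : nat) : rel 'I_k.+1 :=
  fun i j => (i.+1 == j :> nat) || (j.+1 == i :> nat).

Definition path_skel {R : realFieldType} (a : seq R) : agraph R :=
  AGraph (size a).+1 (path_adj (size a))
    (fun i j => nth 0 a (maxn i j).-1) (fun _ => 0).

(* P^(t)_k(a_1,...,a_k) with features x_{v_i} = d^(t)(v_0, v_i) *)
Definition pathG {R : realFieldType} (beta : R) (t : nat) (a : seq R) : agraph R :=
  AGraph (size a).+1 (path_adj (size a))
    (fun i j => nth 0 a (maxn i j).-1)
    (fun v => dist beta t (path_skel a) ord0 v).

(* Main.v *)
Require Import Defs.
From HB Require Import structures.
From mathcomp Require Import all_boot all_order all_algebra.
From mathcomp Require Import ring lra.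
Import Order.TTheory GRing.Theory Num.Theory.
Local Open Scope ring_scope.

Section Aux.
Variable R : realFieldType.

Lemma relu_pos (z x : R) : 0 < x -> relu z = x -> z = x.
Proof. move=> hx; rewrite /relu maxEle; case: ifP => _ h //; by rewrite -h ltxx in hx. Qed.

Lemma cases3 (w2 k b1 b2 c x : R) :
  w2 * Num.min (relu (k*x+b1)) c + b2 = x ->
  x = w2*c+b2 \/ x = b2 \/ x = w2*(k*x+b1)+b2.
Proof.
move: (k*x+b1) => z <-.
rewrite /relu maxEle minEle; repeat (case: ifP => _).
all: first [by left | by right; left; rewrite mulr0 add0r | by right; right].
Qed.

Lemma pair3 (w2 k b1 b2 x y : R) : x != y ->
  x = w2*(k*x+b1)+b2 -> y = w2*(k*y+b1)+b2 -> w2*k = 1 /\ w2*b1+b2 = 0.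
Proof.
move=> nxy Hx Hy.
have e : (w2*k-1)*(x-y) = (w2*(k*x+b1)+b2 - x) - (w2*(k*y+b1)+b2 - y) by ring.
rewrite -Hx -Hy !subrr in e.
move/eqP: e; rewrite mulf_eq0 !subr_eq0 (negbTE nxy) orbF => /eqP hk.
split=> //.
have e2 : w2*b1+b2 = (w2*(k*x+b1)+b2) - x + (1 - w2*k)*x by ring.
by rewrite e2 -Hx hk !subrr mul0r addr0.
Qed.
End Aux.

Ltac fin2 n Ha Hb := first [exact: (@pair3 _ _ _ _ _ _ _ n Ha Hb) | by move: n; rewrite Ha Hb eqxx].


Lemma key4 (R : realFieldType) (w2 k b1 b2 c x1 x2 x3 x4 : R) :
  x1 != x2 -> x1 != x3 -> x1 != x4 -> x2 != x3 -> x2 != x4 -> x3 != x4 ->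
  (x1 = w2*c+b2 \/ x1 = b2 \/ x1 = w2*(k*x1+b1)+b2) ->
  (x2 = w2*c+b2 \/ x2 = b2 \/ x2 = w2*(k*x2+b1)+b2) ->
  (x3 = w2*c+b2 \/ x3 = b2 \/ x3 = w2*(k*x3+b1)+b2) ->
  (x4 = w2*c+b2 \/ x4 = b2 \/ x4 = w2*(k*x4+b1)+b2) ->
  w2*k = 1 /\ w2*b1+b2 = 0.
Proof.
move=> n12 n13 n14 n23 n24 n34.
case=> [H1|[H1|H1]]; case=> [H2|[H2|H2]]; case=> [H3|[H3|H3]]; case=> [H4|[H4|H4]].
all: first [fin2 n12 H1 H2 | fin2 n13 H1 H3 | fin2 n14 H1 H4 | fin2 n23 H2 H3 | fin2 n24 H2 H4 | fin2 n34 H3 H4].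
Qed.

Lemma inst1 (R : realFieldType) (beta x w2 W11 W12 b1 b2 : R) : 0 < x -> x < beta ->
  h1 w2 W11 W12 b1 b2 (pathG beta 0 [:: x]) (@Ordinal 2 1 isT)
               = xv (Gamma (pathG beta 0 [:: x])) (@Ordinal 2 1 isT) ->
  x = w2*relu (W11*beta+b1)+b2 \/ x = b2 \/ x = w2*(W12*x+b1)+b2.
Proof.
move=> hx hxb.
rewrite /h1 /= /BF_feat /nbmin /= ![index_enum _]unlock -!enumT !enum_ordSl enum_ord0 !big_cons !big_nil /= /xe /dist /= ?(enum_ordSl 2) ?(enum_ordSl 1) ?(enum_ordSl 0) ?enum_ord0 /=.
rewrite ?mulr0 ?addr0 ?add0r (min_l (ltW hxb)).
by move/(@relu_pos _ _ _ hx)/cases3.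
Qed.

Lemma inst2 (R : realFieldType) (beta x w2 W11 W12 b1 b2 : R) : 0 < x -> x < beta ->
  h1 w2 W11 W12 b1 b2 (pathG beta 1 [:: x; 0]) (@Ordinal 3 2 isT)
               = xv (Gamma (pathG beta 1 [:: x; 0])) (@Ordinal 3 2 isT) ->
  x = w2*relu (W11*beta+b1)+b2 \/ x = b2 \/ x = w2*(W11*x+b1)+b2.
Proof.
move=> hx hxb.
rewrite /h1 /= /BF_feat /nbmin /= ![index_enum _]unlock -!enumT !enum_ordSl enum_ord0 !big_cons !big_nil /= /xe /dist /= ?(enum_ordSl 2) ?(enum_ordSl 1) ?(enum_ordSl 0) ?enum_ord0 /=.
rewrite ?mulr0 ?addr0 ?add0r (min_l (ltW hxb)).
by move/(@relu_pos _ _ _ hx)/cases3.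
Qed.

Theorem mainTheorem2 (R : realFieldType) (beta : R) (a : 'I_8 -> R)
    (w2 W11 W12 b1 b2 : R) :
  0 < beta ->
  (forall i, 0 < a i) ->
  injective a ->
  (forall i, a i < beta) ->
  (forall i : 'I_8, (i < 4)%N ->
     forall u, h1 w2 W11 W12 b1 b2 (pathG beta 0 [:: a i]) u
               = xv (Gamma (pathG beta 0 [:: a i])) u) ->
  (forall i : 'I_8, (4 <= i)%N ->
     forall u, h1 w2 W11 W12 b1 b2 (pathG beta 1 [:: a i; 0]) u
               = xv (Gamma (pathG beta 1 [:: a i; 0])) u) ->
  w2 * W11 = 1 /\ w2 * W12 = 1 /\ w2 * b1 + b2 = 0.
Proof.
move=> _ apos ainj alt HA HB.
have nd : forall i j : 'I_8, (i != j) -> a i != a j.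
  by move=> i j nij; apply/eqP => /ainj /eqP; rewrite (negbTE nij).
have I1 := fun (i : 'I_8) (hi : (i < 4)%N) =>
  @inst1 R beta (a i) w2 W11 W12 b1 b2 (apos i) (alt i) (HA i hi (@Ordinal 2 1 isT)).
have I2 := fun (i : 'I_8) (hi : (4 <= i)%N) =>
  @inst2 R beta (a i) w2 W11 W12 b1 b2 (apos i) (alt i) (HB i hi (@Ordinal 3 2 isT)).
have [e12 e0] := @key4 R w2 W12 b1 b2 _ _ _ _ _ (nd (@Ordinal 8 0 isT) (@Ordinal 8 1 isT) isT)
  (nd (@Ordinal 8 0 isT) (@Ordinal 8 2 isT) isT)
  (nd (@Ordinal 8 0 isT) (@Ordinal 8 3 isT) isT)
  (nd (@Ordinal 8 1 isT) (@Ordinal 8 2 isT) isT)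
  (nd (@Ordinal 8 1 isT) (@Ordinal 8 3 isT) isT)
  (nd (@Ordinal 8 2 isT) (@Ordinal 8 3 isT) isT)
  (I1 (@Ordinal 8 0 isT) isT) (I1 (@Ordinal 8 1 isT) isT) (I1 (@Ordinal 8 2 isT) isT) (I1 (@Ordinal 8 3 isT) isT).
have [e11 _] := @key4 R w2 W11 b1 b2 _ _ _ _ _ (nd (@Ordinal 8 4 isT) (@Ordinal 8 5 isT) isT)
  (nd (@Ordinal 8 4 isT) (@Ordinal 8 6 isT) isT)
  (nd (@Ordinal 8 4 isT) (@Ordinal 8 7 isT) isT)
  (nd (@Ordinal 8 5 isT) (@Ordinal 8 6 isT) isT)
  (nd (@Ordinal 8 5 isT) (@Ordinal 8 7 isT) isT)
  (nd (@Ordinal 8 6 isT) (@Ordinal 8 7 isT) isT)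
  (I2 (@Ordinal 8 4 isT) isT) (I2 (@Ordinal 8 5 isT) isT) (I2 (@Ordinal 8 6 isT) isT) (I2 (@Ordinal 8 7 isT) isT).
by [].
Qed.
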